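(* There exists a constant $C$ (independent of $N$ and $t$) such that, for the processes $x^t$ and $\overline{x}^t$ described in the context, $$\mathbb{E}\big(|\overline{x}^t-x^t|^2\big)\le C N^{-1}\quad\text{for all } t\ge 0.$$
   Context: Two patches have hosting capacities $N_1=N$ and $N_2=dN$, with $d=N_2/N_1\in(0,1]$ fixed; $\kappa>0$ fixed, $\delta t=1/N$, $\kappa\delta t\le 1$. Let $M=\begin{pmatrix} d & -d\\ -1 & 1\end{pmatrix}$ and $A=\mathrm{Id}-\frac{\kappa}{N}M$. For a function $g$ on $\mathcal D=[0,1]^2$ define $$B_N(g)(x)=\sum_{j_1=0}^{N_1}\sum_{j_2=0}^{N_2}\binom{N_1}{j_1}\binom{N_2}{j_2}x_1^{j_1}(1-x_1)^{N_1-j_1}x_2^{j_2}(1-x_2)^{N_2-j_2}\,g\!\left(\tfrac{j_1}{N_1},\tfrac{j_2}{N_2}\right).$$ $(x^n)_{n\ge0}$ is the Markov chain in $\mathcal D$ with transition kernel $\mathbb{E}(f(x^{n+1})\mid x^n=x)=B_N(f\circ A)(x)$. The càdlàg process is $\overline{x}^t=x^n$ for $n\delta t\le t<(n+1)\delta t$, and $x^t$ is the continuous piecewise linear-in-time process with $x^t=x^n$ at $t=n\delta t$. $|\cdot|$ is the Euclidean norm. *)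

(* Defs.v *)
From Stdlib Require Import Reals.
Open Scope R_scope.

Definition pt := (R * R)%type.

Definition sqnorm (v : pt) : R := fst v ^ 2 + snd v ^ 2.

(* A = Id - (kappa/N) M,  M = [[d,-d],[-1,1]] *)
Definition Amap (kappa d : R) (N : nat) (y : pt) : pt :=
  (fst y - kappa / INR N * (d * fst y - d * snd y),
   snd y - kappa / INR N * (- fst y + snd y)).

Definition bern (n j : nat) (x : R) : R := C n j * x ^ j * (1 - x) ^ (n - j).

(* B_N(g)(x), with N1 = hosting capacity of patch 1, N2 of patch 2;
   sum_f_R0 f n = f 0 + ... + f n *)
Definition BN (N1 N2 : nat) (g : pt -> R) (x : pt) : R :=
  sum_f_R0 (fun j1 =>
    sum_f_R0 (fun j2 =>
      bern N1 j1 (fst x) * bern N2 j2 (snd x) * g (INR j1 / INR N1, INR j2 / INR N2))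
    N2) N1.

(* transition operator: E(f(x^{n+1}) | x^n = x) = B_N(f o A)(x) *)
Definition kernel (kappa d : R) (N N2 : nat) (f : pt -> R) (x : pt) : R :=
  BN N N2 (fun y => f (Amap kappa d N y)) x.

Definition pcons (x0 : pt) (p : nat -> pt) : nat -> pt :=
  fun i => match i with O => x0 | S i' => p i' end.

(* Epath K k F x0 = expectation of F(path) for the Markov chain with transition
   operator K started at x^0 = x0, where the path is (x^0, ..., x^k, x^k, x^k, ...)
   (so F should only depend on the first k+1 coordinates). *)
Fixpoint Epath (K : (pt -> R) -> pt -> R) (k : nat) (F : (nat -> pt) -> R) (x0 : pt) : R :=
  match k with
  | O => F (fun _ => x0)
  | S k' => K (fun y => Epath K k' (fun p => F (pcons x0 p)) y) x0
  end.

(* the index n with n dt <= t < (n+1) dt, dt = 1/N  (for t >= 0) *)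
Definition nstep (N : nat) (t : R) : nat := Z.to_nat (Int_part (t * INR N)).

Definition xbar (N : nat) (p : nat -> pt) (t : R) : pt := p (nstep N t).

Definition xlin (N : nat) (p : nat -> pt) (t : R) : pt :=
  let n := nstep N t in
  let s := (t - INR n / INR N) * INR N in
  (fst (p n) + s * (fst (p (S n)) - fst (p n)),
   snd (p n) + s * (snd (p (S n)) - snd (p n))).

(* Main.v *)
Require Import Defs.
From Stdlib Require Import Reals Lra Lia ZArith Psatz.
Open Scope R_scope.

Lemma C_nn n : C n n = 1.
Proof. unfold C. rewrite Nat.sub_diag. simpl. field. apply INR_fact_neq_0. Qed.
Lemma C_n0 n : C n 0 = 1.
Proof. unfold C. rewrite Nat.sub_0_r. simpl. field. apply INR_fact_neq_0. Qed.
Lemma C_ge0 n k : 0 <= C n k.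
Proof. unfold C. apply Rlt_le, Rdiv_lt_0_compat. apply INR_fact_lt_0.
  apply Rmult_lt_0_compat; apply INR_fact_lt_0. Qed.

Definition w (n j : nat) (x : R) : R := if (j <=? n)%nat then bern n j x else 0.

Lemma bern_ge0 n j x : 0 <= x <= 1 -> 0 <= bern n j x.
Proof. intros. unfold bern. apply Rmult_le_pos. apply Rmult_le_pos. apply C_ge0.
  apply pow_le; lra. apply pow_le; lra. Qed.

Lemma w_S0 n x : w (S n) 0 x = (1 - x) * w n 0 x.
Proof. unfold w, bern. simpl. rewrite !C_n0. simpl. rewrite Nat.sub_0_r. ring. Qed.

Lemma w_SS n j x : w (S n) (S j) x = x * w n j x + (1 - x) * w n (S j) x.
Proof.
  unfold w. destruct (Nat.lt_total j n) as [H|[H|H]].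
  - assert (E1: (S j <=? S n)%nat = true) by (apply Nat.leb_le; lia).
    assert (E2: (j <=? n)%nat = true) by (apply Nat.leb_le; lia).
    assert (E3: (S j <=? n)%nat = true) by (apply Nat.leb_le; lia).
    rewrite E1, E2, E3. unfold bern. rewrite <- pascal by lia.
    replace (S n - S j)%nat with (S (n - S j)) by lia.
    replace (n - j)%nat with (S (n - S j)) by lia. simpl. ring.
  - subst j. assert (E1: (S n <=? S n)%nat = true) by (apply Nat.leb_le; lia).
    assert (E2: (n <=? n)%nat = true) by (apply Nat.leb_le; lia).
    assert (E3: (S n <=? n)%nat = false) by (apply Nat.leb_gt; lia).
    rewrite E1, E2, E3. unfold bern. rewrite !C_nn, !Nat.sub_diag. simpl. ring.
  - assert (E1: (S j <=? S n)%nat = false) by (apply Nat.leb_gt; lia).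
    assert (E2: (j <=? n)%nat = false) by (apply Nat.leb_gt; lia).
    assert (E3: (S j <=? n)%nat = false) by (apply Nat.leb_gt; lia).
    rewrite E1, E2, E3. ring.
Qed.

Definition T n M (f : nat -> R) x := sum_f_R0 (fun j => w n j x * f j) M.

Lemma T_ext n M f x : (n <= M)%nat -> T n M f x = T n n f x.
Proof.
  intros H. induction H. reflexivity.
  unfold T in *. rewrite tech5, IHle. unfold w.
  assert (E: (S m <=? n)%nat = false) by (apply Nat.leb_gt; lia). rewrite E. ring.
Qed.

Lemma T_rec n f x : T (S n) (S n) f x = x * T n n (fun j => f (S j)) x + (1 - x) * T n n f x.
Proof.
  unfold T at 1. rewrite decomp_sum by lia. simpl pred.
  rewrite (sum_eq _ (fun i => x * (w n i x * f (S i)) + (1-x) * (w n (S i) x * f (S i))))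
    by (intros; rewrite w_SS; ring).
  rewrite plus_sum, <- (T_ext n (S n) f x) by lia.
  unfold T. rewrite (decomp_sum _ (S n)) by lia. simpl pred.
  rewrite w_S0, !scal_sum.
  rewrite (sum_eq (fun i => x * (w n i x * f (S i))) (fun i => w n i x * f (S i) * x)) by (intros; ring).
  rewrite (sum_eq (fun i => (1-x) * (w n (S i) x * f (S i))) (fun i => w n (S i) x * f (S i) * (1-x))) by (intros; ring).
  rewrite Rmult_plus_distr_l, (scal_sum _ n (1-x)). ring.
Qed.

Lemma T_lin n f g a b x : T n n (fun j => a * f j + b * g j) x = a * T n n f x + b * T n n g x.
Proof.
  unfold T. rewrite (sum_eq _ (fun j => w n j x * f j * a + w n j x * g j * b)) by (intros; ring).
  rewrite plus_sum, <- !scal_sum. ring.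
Qed.

Lemma T0 n x : T n n (fun _ => 1) x = 1.
Proof. induction n. unfold T, w, bern. simpl. rewrite C_n0. ring.
  rewrite T_rec, IHn. ring. Qed.

Lemma T_eq n f g x : (forall j, f j = g j) -> T n n f x = T n n g x.
Proof. intros H. unfold T. apply sum_eq. intros; rewrite H; ring. Qed.

Lemma T1 n x : T n n INR x = INR n * x.
Proof. induction n. unfold T, w, bern. simpl. ring.
  rewrite T_rec, IHn.
  rewrite (T_eq n (fun j => INR (S j)) (fun j => 1 * INR j + 1 * 1)) by (intros; rewrite S_INR; ring).
  rewrite T_lin, IHn, T0. rewrite S_INR. ring. Qed.

Lemma T2 n x : T n n (fun j => INR j * INR j) x = INR n * (INR n - 1) * x * x + INR n * x.
Proof. induction n. unfold T, w, bern. simpl. ring.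
  rewrite T_rec, IHn.
  rewrite (T_eq n (fun j => INR (S j) * INR (S j)) (fun j => 1 * (INR j * INR j) + 1 * (2 * INR j + 1))) by (intros; rewrite S_INR; ring).
  rewrite T_lin, IHn.
  rewrite (T_eq n (fun j => 2 * INR j + 1) (fun j => 2 * INR j + 1 * 1)) by (intros; ring).
  rewrite T_lin, T1, T0. rewrite S_INR. ring. Qed.

Lemma Tvar n x : (1 <= n)%nat ->
  T n n (fun j => (INR j / INR n - x) ^ 2) x = x * (1 - x) / INR n.
Proof.
  intros Hn. assert (Hn' : INR n <> 0) by (apply not_0_INR; lia).
  rewrite (T_eq n _ (fun j => (1 / (INR n * INR n)) * (INR j * INR j) + 1 * ((-2 * x / INR n) * INR j + (x*x) * 1)))
    by (intros; field; auto).
  rewrite T_lin.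
  rewrite (T_lin n INR (fun _ => 1)), T2, T1, T0. field. auto.
Qed.

Definition inD (y : pt) := 0 <= fst y <= 1 /\ 0 <= snd y <= 1.

Lemma sum_bern_T n f x : sum_f_R0 (fun j => bern n j x * f j) n = T n n f x.
Proof. unfold T. apply sum_eq. intros i Hi. unfold w.
  assert (E: (i <=? n)%nat = true) by (apply Nat.leb_le; lia). rewrite E. ring. Qed.

Lemma sum_scal_l (A : nat -> R) c N : sum_f_R0 (fun j => c * A j) N = c * sum_f_R0 A N.
Proof. rewrite scal_sum. apply sum_eq. intros; ring. Qed.

Lemma BN_sep N1 N2 (p1 p2 : R -> R) a b c x :
  BN N1 N2 (fun y => a * p1 (fst y) + b * p2 (snd y) + c) x =
  a * T N1 N1 (fun j => p1 (INR j / INR N1)) (fst x)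
  + b * T N2 N2 (fun j => p2 (INR j / INR N2)) (snd x) + c.
Proof.
  unfold BN. simpl fst. simpl snd.
  set (Q := T N2 N2 (fun j => p2 (INR j / INR N2)) (snd x)).
  rewrite (sum_eq _ (fun j1 => bern N1 j1 (fst x) *
     (a * p1 (INR j1 / INR N1) + (b * Q + c) * 1))).
  2:{ intros j1 _.
      rewrite (sum_eq _ (fun j2 => bern N1 j1 (fst x) * (bern N2 j2 (snd x) * ((a * p1 (INR j1 / INR N1) + c) * 1 + b * p2 (INR j2 / INR N2))))) by (intros; ring).
      rewrite sum_scal_l, sum_bern_T, T_lin, T0. unfold Q. f_equal. ring. }
  rewrite sum_bern_T, T_lin, T0. ring.
Qed.

Lemma frac01 j n : (1 <= n)%nat -> (j <= n)%nat -> 0 <= INR j / INR n <= 1.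
Proof.
  intros Hn Hj. assert (0 < INR n) by (apply lt_0_INR; lia).
  apply le_INR in Hj. pose proof (pos_INR j).
  split.
  - unfold Rdiv. apply Rmult_le_pos; [lra| left; apply Rinv_0_lt_compat; lra].
  - apply (Rmult_le_reg_r (INR n)); [lra|]. unfold Rdiv. rewrite Rmult_assoc, Rinv_l; lra.
Qed.

Lemma BN_mono N1 N2 g h x : (1 <= N1)%nat -> (1 <= N2)%nat -> inD x ->
  (forall y, inD y -> g y <= h y) -> BN N1 N2 g x <= BN N1 N2 h x.
Proof.
  intros H1 H2 [Hx1 Hx2] Hgh. unfold BN. apply sum_Rle. intros j1 Hj1. apply sum_Rle. intros j2 Hj2.
  apply Rmult_le_compat_l.
  - apply Rmult_le_pos; apply bern_ge0; auto.
  - apply Hgh. split; apply frac01; lia.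
Qed.

Lemma BN_const N1 N2 c x : BN N1 N2 (fun _ => c) x = c.
Proof.
  transitivity (BN N1 N2 (fun y => 0 * (fun _ => 0) (fst y) + 0 * (fun _ => 0) (snd y) + c) x).
  - unfold BN. apply sum_eq; intros; apply sum_eq; intros. f_equal. ring.
  - etransitivity; [apply (BN_sep N1 N2 (fun _ => 0) (fun _ => 0) 0 0 c x)|ring].
Qed.

Lemma Epath_bound (K : (pt -> R) -> pt -> R) (H : pt -> pt -> R) (B : R)
  (Kmono : forall g y, inD y -> (forall z, inD z -> g z <= B) -> K g y <= B)
  (Hstep : forall y, inD y -> K (fun z => H y z) y <= B) :
  forall n x0, inD x0 -> Epath K (S n) (fun p => H (p n) (p (S n))) x0 <= B.
Proof.
  induction n; intros x0 Hx0.
  - simpl. apply Hstep. auto.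
  - simpl. apply Kmono; auto.
Qed.

Lemma Amap_D kappa d N y : 0 < d <= 1 -> 0 < kappa -> (1 <= N)%nat -> kappa * (1 / INR N) <= 1 ->
  inD y -> inD (Amap kappa d N y).
Proof.
  intros Hd Hk HN Hk1 [[a1 a2] [b1 b2]]. unfold Amap. simpl.
  assert (0 < INR N) by (apply lt_0_INR; lia).
  set (k := kappa / INR N).
  assert (Hk0 : 0 < k) by (unfold k; unfold Rdiv; apply Rmult_lt_0_compat; [lra| apply Rinv_0_lt_compat; lra]).
  assert (Hk2 : k <= 1) by (unfold k; unfold Rdiv; lra).
  destruct y as [y1 y2]. simpl in *.
  assert (0 <= k * d <= 1) by nra.
  set (m := k * d) in *.
  assert (0 <= (1-m)*y1) by (apply Rmult_le_pos; lra).
  assert (0 <= m*y2) by (apply Rmult_le_pos; lra).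
  assert (0 <= (1-m)*(1-y1)) by (apply Rmult_le_pos; lra).
  assert (0 <= m*(1-y2)) by (apply Rmult_le_pos; lra).
  assert (0 <= (1-k)*y2) by (apply Rmult_le_pos; lra).
  assert (0 <= k*y1) by (apply Rmult_le_pos; lra).
  assert (0 <= (1-k)*(1-y2)) by (apply Rmult_le_pos; lra).
  assert (0 <= k*(1-y1)) by (apply Rmult_le_pos; lra).
  assert (E1 : y1 - k * (d * y1 - d * y2) = (1-m)*y1 + m*y2) by (unfold m; ring).
  assert (E2 : y2 - k * (- y1 + y2) = (1-k)*y2 + k*y1) by ring.
  rewrite E1, E2. unfold inD; simpl. split; split; nra.
Qed.

Lemma sq_bound u v : (u - v) ^ 2 <= 2 * u ^ 2 + 2 * v ^ 2.
Proof. assert (E: 2*u^2+2*v^2 - (u-v)^2 = (u+v)^2) by ring. pose proof (pow2_ge_0 (u+v)). lra. Qed.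

Lemma BN_quad N1 N2 a b c x : (1 <= N1)%nat -> (1 <= N2)%nat ->
  BN N1 N2 (fun Y => a * (fst Y - fst x)^2 + b * (snd Y - snd x)^2 + c) x =
  a * (fst x * (1 - fst x) / INR N1) + b * (snd x * (1 - snd x) / INR N2) + c.
Proof.
  intros H1 H2.
  etransitivity; [apply (BN_sep N1 N2 (fun r => (r - fst x)^2) (fun r => (r - snd x)^2))|].
  cbv beta. rewrite !Tvar by auto. reflexivity.
Qed.

Lemma nstep_frac N t : (1 <= N)%nat -> 0 <= t ->
  0 <= (t - INR (nstep N t) / INR N) * INR N <= 1.
Proof.
  intros HN Ht. assert (0 < INR N) by (apply lt_0_INR; lia).
  unfold nstep. destruct (base_Int_part (t * INR N)) as [A B].
  set (z := Int_part (t * INR N)) in *.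
  assert (Hz : (0 <= z)%Z).
  { assert (-1 < IZR z) by nra. apply lt_IZR in H0. lia. }
  rewrite INR_IZR_INZ, Z2Nat.id by auto.
  replace ((t - IZR z / INR N) * INR N) with (t * INR N - IZR z) by (field; lra).
  lra.
Qed.

Lemma quarter y : y * (1 - y) <= 1/4.
Proof. assert (E: 1/4 - y * (1 - y) = (y - 1/2)^2) by field. pose proof (pow2_ge_0 (y - 1/2)). lra. Qed.

Theorem corollary1 :
  forall (d kappa : R), 0 < d <= 1 -> 0 < kappa ->
  exists C : R,
    forall (N N2 : nat) (x0 : pt) (t : R),
      (1 <= N)%nat ->
      INR N2 = d * INR N ->
      kappa * (1 / INR N) <= 1 ->
      0 <= fst x0 <= 1 -> 0 <= snd x0 <= 1 ->
      0 <= t ->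
      Epath (kernel kappa d N N2) (S (nstep N t))
        (fun p => sqnorm (fst (xbar N p t) - fst (xlin N p t),
                          snd (xbar N p t) - snd (xlin N p t))) x0
      <= C * / INR N.
Proof.
  intros d kappa Hd Hk. exists (1 + 1/d + 4 * kappa^2).
  intros N N2 x0 t HN HN2 Hk1 Hx1 Hx2 Ht.
  assert (HNr : 0 < INR N) by (apply lt_0_INR; lia).
  assert (HN2' : (1 <= N2)%nat).
  { destruct N2. simpl in HN2. nra. lia. }
  pose proof (nstep_frac N t HN Ht) as Hs.
  set (n := nstep N t) in *.
  set (s := (t - INR n / INR N) * INR N) in *.
  set (B := (1 + 1/d + 4 * kappa^2) * / INR N).
  set (H := fun a b : pt => sqnorm (fst a - (fst a + s * (fst b - fst a)),
                                     snd a - (snd a + s * (snd b - snd a)))).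
  change (Epath (kernel kappa d N N2) (S n) (fun p => H (p n) (p (S n))) x0 <= B).
  apply Epath_bound; [| |split; auto].
  - intros g y Hy Hg. unfold kernel.
    apply Rle_trans with (BN N N2 (fun _ => B) y); [|rewrite BN_const; lra].
    apply BN_mono; auto. intros Y HY. apply Hg. apply Amap_D; auto.
  - intros y Hy. unfold kernel.
    set (k := kappa / INR N).
    apply Rle_trans with (BN N N2 (fun Y => 2 * (fst Y - fst y)^2 + 2 * (snd Y - snd y)^2 + 4 * k^2) y).
    + apply BN_mono; auto. intros [Y1 Y2] [[a1 a2] [b1 b2]]. simpl in a1, a2, b1, b2.
      unfold H, sqnorm, Amap. simpl fst. simpl snd. fold k.
      destruct y as [y1 y2]. simpl fst; simpl snd.
      assert (Hk0 : 0 < k) by (unfold k; unfold Rdiv; apply Rmult_lt_0_compat; [lra| apply Rinv_0_lt_compat; lra]).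
      set (w1 := Y1 - k * (d * Y1 - d * Y2) - y1).
      set (w2 := Y2 - k * (- Y1 + Y2) - y2).
      assert (E1 : (y1 - (y1 + s * w1)) ^ 2 = s^2 * w1^2) by ring.
      assert (E2 : (y2 - (y2 + s * w2)) ^ 2 = s^2 * w2^2) by ring.
      rewrite E1, E2.
      assert (s^2 <= 1) by nra.
      assert (F1 : s^2 * w1^2 <= w1^2) by (pose proof (pow2_ge_0 w1); nra).
      assert (F2 : s^2 * w2^2 <= w2^2) by (pose proof (pow2_ge_0 w2); nra).
      assert (G1 : w1^2 <= 2 * (Y1 - y1)^2 + 2 * (k * (d * (Y1 - Y2)))^2)
        by (replace w1 with ((Y1 - y1) - k * (d * (Y1 - Y2))) by (unfold w1; ring); apply sq_bound).
      assert (G2 : w2^2 <= 2 * (Y2 - y2)^2 + 2 * (k * (Y2 - Y1))^2)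
        by (replace w2 with ((Y2 - y2) - k * (Y2 - Y1)) by (unfold w2; ring); apply sq_bound).
      assert (D12 : (Y1 - Y2)^2 <= 1).
      { assert (0 <= (1 - (Y1 - Y2)) * (1 + (Y1 - Y2))) by (apply Rmult_le_pos; lra).
        replace ((Y1 - Y2)^2) with (1 - (1 - (Y1 - Y2)) * (1 + (Y1 - Y2))) by ring. lra. }
      assert (K1 : (k * (d * (Y1 - Y2)))^2 <= k^2).
      { assert ((d * (Y1 - Y2))^2 <= 1).
        { replace ((d * (Y1 - Y2))^2) with (d^2 * (Y1 - Y2)^2) by ring.
          assert (d^2 <= 1) by nra. pose proof (pow2_ge_0 (Y1 - Y2)). nra. }
        replace ((k * (d * (Y1 - Y2)))^2) with (k^2 * (d * (Y1 - Y2))^2) by ring.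
        pose proof (pow2_ge_0 k). nra. }
      assert (K2 : (k * (Y2 - Y1))^2 <= k^2).
      { assert ((Y2 - Y1)^2 <= 1) by (replace ((Y2 - Y1)^2) with ((Y1 - Y2)^2) by ring; lra).
        replace ((k * (Y2 - Y1))^2) with (k^2 * (Y2 - Y1)^2) by ring.
        pose proof (pow2_ge_0 k). nra. }
      lra.
    + rewrite BN_quad by auto. rewrite HN2.
      destruct Hy as [[a1 a2] [b1 b2]].
      assert (P1 : fst y * (1 - fst y) <= 1/4) by apply quarter.
      assert (P2 : snd y * (1 - snd y) <= 1/4) by apply quarter.
      assert (Q1 : 0 <= fst y * (1 - fst y)) by (apply Rmult_le_pos; lra).
      assert (Q2 : 0 <= snd y * (1 - snd y)) by (apply Rmult_le_pos; lra).
      unfold B, k.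
      set (a := fst y * (1 - fst y)) in *. set (b := snd y * (1 - snd y)) in *.
      set (M := INR N) in *.
      assert (HM : 1 <= M) by (unfold M; apply (le_INR 1); auto).
      assert (E : (1 + 1 / d + 4 * kappa ^ 2) * / M - (2 * (a / M) + 2 * (b / (d * M)) + 4 * (kappa / M) ^ 2)
                = ((1 - 2 * a) + (1 - 2 * b) / d + 4 * kappa^2 * (1 - 1 / M)) / M) by (field; lra).
      assert (0 <= ((1 - 2 * a) + (1 - 2 * b) / d + 4 * kappa^2 * (1 - 1 / M)) / M).
      { unfold Rdiv. apply Rmult_le_pos; [|left; apply Rinv_0_lt_compat; lra].
        assert (0 <= (1 - 2*b) * / d) by (apply Rmult_le_pos; [lra|left; apply Rinv_0_lt_compat; lra]).
        assert (0 <= 1 - 1 * / M).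
        { assert (/ M <= 1). { rewrite <- Rinv_1. apply Rinv_le_contravar; lra. } lra. }
        assert (0 <= kappa^2) by apply pow2_ge_0.
        assert (0 <= 4 * kappa^2 * (1 - 1 * / M)) by (apply Rmult_le_pos; lra).
        lra. }
      lra.
Qed.
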